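(* Let $n\ge2$, $m,m'\in\mathbb{Z}$ with $m'\neq0$, $\gcd(n,m)=1$ and $\gcd(n,m+m')=1$. Then $$\Delta_{T(n,m+m')}(q)=\frac{1}{[n]_q\,(1-q^{m'})}\,\zeta(q^{m'},\sigma_{n,m};\beta_{n,q})^{-1},$$ where $\zeta(q^{m'},\sigma_{n,m};\beta_{n,q})$ denotes the value of the rational function $\zeta(s,\sigma_{n,m};\beta_{n,q})$ at $s=q^{m'}$, and $\Delta_{T(n,m+m')}(q)=\frac{(1-q)(1-q^{n(m+m')})}{(1-q^n)(1-q^{m+m'})}$ is the representative of the Alexander polynomial of the torus knot $T(n,m+m')$ normalized so that $\operatorname{Res}_{s=1}\zeta(s,\sigma_{n,m+m'};\beta_{n,q})=-[n]_q^{-1}\Delta_{T(n,m+m')}(q)^{-1}$.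
   Context: $\sigma_{n,m}:=(\sigma_1\cdots\sigma_{n-1})^m\in\mathrm{B}_n$, whose closure is the torus knot $T(n,m)$. The Burau representation $\beta_{n,q}$ is given by $\beta_{n,q}(\sigma_i)=I_{i-1}\oplus\begin{pmatrix}1-q&1\\ q&0\end{pmatrix}\oplus I_{n-i-1}$ over $\mathbb{Z}[q^{\pm1}]$, and $\zeta(s,\sigma;\beta_{n,q}):=\det(I_n-\beta_{n,q}(\sigma)s)^{-1}$. $[n]_q=(1-q^n)/(1-q)$. *)

(* Defs.v *)
From HB Require Import structures.
From mathcomp Require Import all_boot all_order all_algebra fraction.
Set Implicit Arguments. Unset Strict Implicit. Unset Printing Implicit Defensive.
Import Order.TTheory GRing.Theory Num.Theory.
Local Open Scope ring_scope.

Definition K : fieldType := {fraction {poly int}}.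
Definition q : K := @FracField.tofrac {poly int} 'X.

(* Burau matrix of sigma_i (1 <= i <= n-1), indices 0-based *)
Definition burau (n i : nat) : 'M[K]_n :=
  \matrix_(r < n, c < n)
    if (r == i.-1 :> nat) && (c == i.-1 :> nat) then 1 - q
    else if (r == i.-1 :> nat) && (c == i :> nat) then 1
    else if (r == i :> nat) && (c == i.-1 :> nat) then q
    else if (r == i :> nat) && (c == i :> nat) then 0
    else ((r == c :> nat)%:R : K).

Definition burau_cox (n : nat) : 'M[K]_n :=
  foldr (fun i A => burau n i *m A) 1%:M (iota 1 n.-1).

Definition mxpown (n : nat) (A : 'M[K]_n) (k : nat) : 'M[K]_n :=
  iter k (mulmx A) 1%:M.

Definition mxpowz (n : nat) (A : 'M[K]_n) (m : int) : 'M[K]_n :=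
  match m with
  | Posz k => mxpown A k
  | Negz k => mxpown (invmx A) k.+1
  end.

(* beta_{n,q}(sigma_{n,m}) = beta(sigma_1 ... sigma_{n-1})^m *)
Definition burau_sigma (n : nat) (m : int) : 'M[K]_n := mxpowz (burau_cox n) m.

Definition zeta (n : nat) (m : int) (s : K) : K :=
  (\det (1%:M - s *: burau_sigma n m))^-1.

Definition qint (n : nat) : K := (1 - q ^+ n) / (1 - q).

Definition alex_torus (n : nat) (k : int) : K :=
  ((1 - q) * (1 - q ^ (n%:Z * k))) / ((1 - q ^+ n) * (1 - q ^ k)).

(* Main.v *)
Require Import Defs.
From HB Require Import structures.
From mathcomp Require Import all_boot all_order all_algebra all_fingroup fraction.
From mathcomp Require Import zify ring.
Set Implicit Arguments. Unset Strict Implicit. Unset Printing Implicit Defensive.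
Import Order.TTheory GRing.Theory Num.Theory.
Local Open Scope ring_scope.

Section S.
Variable p : nat.
Local Notation n := p.+1.

Definition ONE : 'rV[K]_n := const_mx 1.
Definition Q (k : nat) : 'M[K]_n := \matrix_(r, c) (((r : nat) == ((c + k) %% n)%N)%:R).

Lemma sum_ind (F : nat -> K) (a : nat) : (a < n)%N ->
  \sum_(j < n) F j * ((j : nat) == a)%:R = F a.
Proof.
move=> Ha; rewrite (bigD1 (Ordinal Ha)) //= eqxx mulr1 big1 ?addr0 //.
move=> j Hj; have -> : ((j : nat) == a) = false.
  by apply/negbTE; apply: contra Hj => /eqP E; apply/eqP; apply: val_inj.
by rewrite mulr0.
Qed.

Lemma sum_ind' (F : nat -> K) (a : nat) : (a < n)%N ->
  \sum_(j < n) (a == (j : nat))%:R * F j = F a.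
Proof.
move=> Ha; rewrite -[RHS](sum_ind F Ha); apply: eq_bigr => j _.
by rewrite mulrC eq_sym.
Qed.

Lemma Q_mul k l : Q k *m Q l = Q (k + l).
Proof.
apply/matrixP => r c; rewrite !mxE.
rewrite (eq_bigr (fun j : 'I_n => (((r:nat) == ((j + k) %% n)%N)%:R : K) * ((j : nat) == ((c + l) %% n)%N)%:R)).
  rewrite (sum_ind (fun j => (((r:nat) == ((j + k) %% n)%N)%:R : K))) ?ltn_mod //.
  by rewrite modnDml addnAC addnA.
by move=> j _; rewrite !mxE.
Qed.

Lemma Q0 : Q 0 = 1%:M.
Proof.
apply/matrixP => r c; rewrite !mxE addn0 modn_small //.
Qed.

Lemma Qn k : Q (k * n) = 1%:M.
Proof.
apply/matrixP => r c; rewrite !mxE addnC modnMDl modn_small //.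
Qed.

Lemma ONE_Q k : ONE *m Q k = ONE.
Proof.
apply/matrixP => i c; rewrite !mxE.
rewrite (eq_bigr (fun j : 'I_n => ((((c + k) %% n)%N == (j : nat))%:R : K) * 1)).
  by rewrite (sum_ind' (fun j => (1 : K))) ?ltn_mod.
by move=> j _; rewrite !mxE mul1r mulr1 eq_sym.
Qed.


Definition NN (t s : K) (A : 'M[K]_n) : 'M[K]_n :=
  \matrix_(i, j) if i == ord0 then 1 else (t%:M - s *: A) i j.

Lemma detNN (t s a : K) (A : 'M[K]_n) : ONE *m A = a *: ONE ->
  \det (t%:M - s *: A) = (t - s * a) * \det (NN t s A).
Proof.
move=> HA.
set M := t%:M - s *: A.
pose L0 : 'M[K]_n := \matrix_(i, j) if i == ord0 then 1 else (i == j)%:R.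
pose D : 'M[K]_n := diag_mx (\row_j (if j == ord0 then t - s * a else 1)).
have dL0 : \det L0 = 1.
  rewrite -det_tr det_trig.
    by apply: big1 => i _; rewrite !mxE eqxx; case: ifP.
  apply/is_trig_mxP => i j ltij; rewrite !mxE.
  have -> : (j == ord0) = false.
    by apply/negbTE; apply/eqP => E; rewrite E in ltij.
  by have -> : (j == i) = false by apply/negbTE; rewrite neq_ltn ltij orbT.
have dD : \det D = t - s * a.
  rewrite det_diag (bigD1 ord0) //= !mxE eqxx big1 ?mulr1 //.
  by move=> i /negbTE Hi; rewrite !mxE Hi.
have HM : ONE *m M = (t - s * a) *: ONE.
  by rewrite /M mulmxBr mul_mx_scalar -scalemxAr HA scalerA scalerBl.
have E : L0 *m M = D *m NN t s A.
  apply/matrixP => i j; rewrite mul_diag_mx !mxE.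
  case: ifP => Hi.
    have := congr1 (fun X : 'M[K]_(1,n) => X ord0 j) HM; rewrite !mxE => <-.
    by apply: eq_bigr => k _; rewrite !mxE Hi.
  pose F := fun k : nat => if @insub _ (fun x => x < n)%N _ k is Some k' then M k' j else 0.
  rewrite mul1r (eq_bigr (fun k : 'I_n => ((i : nat) == k)%:R * F k)).
    by rewrite (sum_ind' F) ?ltn_ord // /F valK /M !mxE.
  move=> k _; rewrite /F valK !mxE Hi //.
have := congr1 determinant E; rewrite !det_mulmx dL0 dD mul1r => ->.
by [].
Qed.

Lemma NN_rank1 (t s : K) (A C : 'M[K]_n) (w : 'cV[K]_n) : A = C + w *m ONE ->
  \det (NN t s A) = \det (NN t s C).
Proof.
move=> HAC.
pose F : 'M[K]_n := \matrix_(i, j) if (j == ord0) && (i != ord0) then - s * w i ord0 else 0.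
have dF : \det (1%:M + F) = 1.
  rewrite det_trig.
    by apply: big1 => i _; rewrite !mxE eqxx andbN addr0.
  apply/is_trig_mxP => i j ltij; rewrite !mxE.
  have -> : (j == ord0) = false.
    by apply/negbTE; apply/eqP => E; rewrite E in ltij.
  have /negbTE -> : i != j by rewrite neq_ltn ltij.
  by rewrite /= ?mulr0n addr0.

have E : NN t s A = (1%:M + F) *m NN t s C.
  apply/matrixP => i j; rewrite mulmxDl mul1mx !mxE.
  rewrite (bigD1 ord0) //= big1 ?addr0; last first.
    by move=> k /negbTE Hk; rewrite !mxE Hk /= mul0r.
  rewrite !mxE eqxx /=; case: (i =P ord0) => Hi /=.
    by rewrite mulr1 addr0.
  rewrite HAC !mxE big_ord1 !mxE mulr1; ring.
by rewrite E det_mulmx dF mul1r.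
Qed.

Lemma detL (t s a c : K) (A C : 'M[K]_n) (w : 'cV[K]_n) :
  ONE *m A = a *: ONE -> ONE *m C = c *: ONE -> A = C + w *m ONE ->
  \det (t%:M - s *: A) * (t - s * c) = \det (t%:M - s *: C) * (t - s * a).
Proof.
move=> HA HC HAC; rewrite (detNN t s HA) (detNN t s HC) (NN_rank1 t s HAC); ring.
Qed.
End S.

Lemma modle x d : (x <= d)%N -> (x %% d = if x == d then 0 else x)%N.
Proof. move=> H; case: eqP => [->|ne]; first by rewrite modnn. rewrite modn_small //; lia. Qed.

Ltac natF := rewrite /bump => *; repeat (rewrite modle; last by lia);
  repeat case: ifPn => ?; apply/negbTE/eqP; lia.
Ltac natT := rewrite /bump => *; repeat (rewrite modle; last by lia);
  repeat case: ifPn => ?; apply/eqP; lia.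

Lemma detQ1 r (y : K) : \det (1%:M - y *: Q r.+1 1) = 1 - y ^+ r.+2.
Proof.
rewrite (expand_det_row _ ord0) big_ord_recl big_ord_recr /= big1; last first.
  move=> i _; rewrite !mxE /=.
  have -> : (0%N == ((bump 0 i + 1) %% r.+2)%N) = false by move: (ltn_ord i); natF.
  by rewrite mulr0 subr0 mul0r.
have E1 : cofactor (1%:M - y *: Q r.+1 1) ord0 ord0 = 1.
  rewrite /cofactor /= expr0 mul1r det_trig.
    apply: big1 => i _; rewrite !mxE /=.
    rewrite eqxx.
    have -> : (bump 0 i == ((bump 0 i + 1) %% r.+2)%N) = false by move: (ltn_ord i); natF.
    by rewrite mulr0 subr0.
  apply/is_trig_mxP => i j ltij; rewrite !mxE /=.
  have -> : (lift ord0 i == lift ord0 j) = false by rewrite -val_eqE /=; move: (ltn_ord i) (ltn_ord j) ltij; natF.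
  have -> : (bump 0 i == ((bump 0 j + 1) %% r.+2)%N) = false by move: (ltn_ord i) (ltn_ord j) ltij; natF.
  by rewrite mulr0 subr0.
have E2 : cofactor (1%:M - y *: Q r.+1 1) ord0 (lift ord0 ord_max) = (-1) ^+ r.+1 * (- y) ^+ r.+1.
  rewrite /cofactor /= -det_tr det_trig.
    congr (_ * _); rewrite -[in RHS](card_ord r.+1) -prodr_const; apply: eq_bigr => i _.
    rewrite !mxE /=.
    have -> : (lift ord0 i == lift (lift ord0 ord_max) i) = false by rewrite -val_eqE /=; move: (ltn_ord i); natF.
    have -> : (bump 0 i == ((bump (bump 0 r) i + 1) %% r.+2)%N) = true by move: (ltn_ord i); natT.
    by rewrite /= ?mulr0n sub0r mulr1.
  apply/is_trig_mxP => i j ltij; rewrite !mxE /=.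
  have -> : (lift ord0 j == lift (lift ord0 ord_max) i) = false by rewrite -val_eqE /=; move: (ltn_ord i) (ltn_ord j) ltij; natF.
  have -> : (bump 0 j == ((bump (bump 0 r) i + 1) %% r.+2)%N) = false by move: (ltn_ord i) (ltn_ord j) ltij; natF.
  by rewrite mulr0 subr0.
rewrite E1 E2 !mxE /=.
have -> : (0%N == ((bump 0 r + 1) %% r.+2)%N) = true by natT.
have s1 : (-1) ^+ r.+1 * (-1) ^+ r.+1 = 1 :> K by rewrite -exprMn mulrNN mulr1 expr1n.
rewrite [(- y) ^+ _]exprNn mulrA s1 mul1r.
rewrite (_ : true%:R = 1 :> K) // !exprS; ring.
Qed.

Lemma mod_inj (a b k d : nat) : (a < d)%N -> (b < d)%N -> coprime k d ->
  ((a * k) %% d == (b * k) %% d)%N = (a == b).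
Proof.
move=> Ha Hb cop; apply/idP/idP; last by move/eqP->.
wlog le_ab : a b Ha Hb / (a <= b)%N.
  move=> W; case: (leqP a b) => H; first exact: W.
  rewrite eq_sym => /(W b a Hb Ha (ltnW H)); by rewrite eq_sym.
rewrite eq_sym eqn_mod_dvd ?leq_mul2r ?le_ab ?orbT // -mulnBl Gauss_dvdl; last by rewrite coprime_sym.
move=> Hd; have : (b - a == 0)%N.
  apply/negPn/negP => nz; have := dvdn_leq _ Hd; rewrite lt0n nz => /(_ isT); lia.

lia.
Qed.

Lemma det_conj n (s : 'S_n) (A : 'M[K]_n) : \det (row_perm s (col_perm s A)) = \det A.
Proof.
rewrite row_permE col_permE !det_mulmx !det_perm odd_permV.
by rewrite mulrCA -signr_addb addbb expr0 mulr1.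
Qed.

Lemma detQk p k (y : K) : coprime k p.+1 ->
  \det (1%:M - y *: Q p k) = \det (1%:M - y *: Q p 1).
Proof.
move=> cop.
pose f := fun i : 'I_p.+1 => Ordinal (ltn_pmod (i * k) (ltn0Sn p)).
have finj : injective f.
  move=> i j /(congr1 val) /= /eqP; rewrite mod_inj ?ltn_ord // => /eqP E.
  exact: val_inj.
rewrite -(det_conj (perm finj)); congr (\det _).
apply/matrixP => i j; rewrite !mxE !permE /=.
have -> : (f i == f j) = (i == j).
  by rewrite -val_eqE /= mod_inj ?ltn_ord // .
congr (_ - y * _%:R).
have -> : (((j * k) %% p.+1 + k) %% p.+1 = (((j + 1) %% p.+1) * k) %% p.+1)%N by rewrite modnDml modnMml mulnDl mul1n.
by rewrite mod_inj ?ltn_ord ?ltn_pmod.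
Qed.

Lemma natr_if (b : bool) : (b%:R : K) = if b then 1 else 0.
Proof. by case: b. Qed.

Ltac bstep := let H := fresh "H" in case: ifP => H; rewrite ?H; [move: H => /idP H | move: H => /negbT H]; try (exfalso; lia).
Ltac bash := repeat bstep; try ring.

Section S4.
Variable p : nat.
Local Notation n := p.+1.

Definition alpha k (c : nat) : K := if c == k then 1 - q else if c == k.+1 then 1 else 0.
Definition beta k (c : nat) : K := if c == k then q else 0.
Definition gamma k (c : nat) : K := if (c == k) || (c == k.+1) then 0 else 1.

Lemma burau_col k (j c : 'I_n) :
  burau n k.+1 j c = ((j : nat) == k)%:R * alpha k c + ((j : nat) == k.+1)%:R * beta k c
     + ((j : nat) == c)%:R * gamma k c.
Proof.
rewrite /burau mxE /alpha /beta /gamma /= !natr_if.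
have := ltn_ord j; have := ltn_ord c.
move: (j : nat) (c : nat) => a b Ha Hb.
bash.
Qed.

Definition Mf (k r c : nat) : K :=
  if r == 0%N then (if (c < k)%N then 1 - q else if c == k then 1 else 0)
  else if (r <= k)%N then (if c == r.-1 then q else 0) else (r == c)%:R.

Definition Fb := fun (i : nat) (A : 'M[K]_n) => burau n i *m A.

Lemma foldr_mul s X : foldr Fb X s = foldr Fb 1%:M s *m X.
Proof.
elim: s => [|a s IH] /=; first by rewrite mul1mx.
by rewrite /Fb IH mulmxA.
Qed.

Lemma Mf_k k a : Mf k a k = (a == 0%N)%:R.
Proof. rewrite /Mf !natr_if; bash. Qed.
Lemma Mf_k1 k a : Mf k a k.+1 = (a == k.+1)%:R.
Proof. rewrite /Mf !natr_if; bash. Qed.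

Lemma partial k : (k < n)%N -> foldr Fb 1%:M (iota 1 k) = \matrix_(r, c) Mf k r c.
Proof.
elim: k => [|k IH] Hk.
  apply/matrixP => r c; rewrite !mxE /Mf /= !natr_if.
  move: (r : nat) (c : nat) => a b; bash.
rewrite -[k.+1]addn1 iotaD foldr_cat /= foldr_mul IH; last lia.
rewrite /Fb mulmx1 add1n addn1.
apply/matrixP => r c; rewrite !mxE.
rewrite (eq_bigr (fun j : 'I_n => (Mf k r j * ((j : nat) == k)%:R) * alpha k c
   + (Mf k r j * ((j : nat) == k.+1)%:R) * beta k c + (Mf k r j * ((j : nat) == c)%:R) * gamma k c)); last first.
  by move=> j _; rewrite burau_col mxE; ring.
rewrite !big_split /= -!big_distrl /= !sum_ind ?ltn_ord //; last lia.
rewrite Mf_k Mf_k1.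
have := ltn_ord r; have := ltn_ord c.
move: (r : nat) (c : nat) => a b Ha Hb.
rewrite /alpha /beta /gamma.
case: (b =P k) => [->|bk].
  rewrite /= /Mf !natr_if; bash.
case: (b =P k.+1) => [->|bk1].
  rewrite /= /Mf !natr_if; bash.
rewrite /=.
rewrite /Mf !natr_if; bash.
Qed.
End S4.

Section S5.
Variable p : nat.
Local Notation n := p.+1.

Definition inS (c : K) (k : nat) (A : 'M[K]_n) :=
  exists w : 'cV[K]_n, A = c *: Q p k + w *m ONE p.

Lemma inS_mul c1 k1 A1 c2 k2 A2 : inS c1 k1 A1 -> inS c2 k2 A2 ->
  inS (c1 * c2) (k1 + k2) (A1 *m A2).
Proof.
move=> [w1 ->] [w2 ->].
exists (c1 *: (Q p k1 *m w2) + c2 *: w1 + w1 *m (ONE p *m w2)).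
rewrite mulmxDl !mulmxDr -!scalemxAl -!scalemxAr scalerA Q_mul.
rewrite -!mulmxA ONE_Q !mulmxDl -!scalemxAl !mulmxA !addrA.
by [].
Qed.

Lemma Q_inS k : inS 1 k (Q p k).
Proof. by exists 0; rewrite mul0mx addr0 scale1r. Qed.

Lemma iter_inS c k A j : inS c k A -> inS (c ^+ j) (j * k) (iter j (mulmx A) 1%:M).
Proof.
move=> HA; elim: j => [|j IH] /=.
  by rewrite expr0 mul0n -(Q0 p); apply: Q_inS.
by rewrite exprS mulSn; apply: inS_mul.
Qed.

Definition w0 : 'cV[K]_n := \col_i (if i == ord0 then 1 - q else 0).

Lemma burau_cox_eq : (0 < p)%N -> burau_cox n = q *: Q p 1 + w0 *m ONE p.
Proof.
move=> p0; rewrite /burau_cox /= (partial (k:=p)) //.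
apply/matrixP => a b; rewrite !mxE big_ord1 !mxE.
have -> : (a == ord0) = ((a : nat) == 0%N) by [].
have := ltn_ord a; have := ltn_ord b.
move: (a : nat) (b : nat) => x y Hx Hy.
rewrite modle; last lia.
case: ((y + 1)%N =P n) => Hm; rewrite /Mf !natr_if; bash.
Qed.

End S5.

Lemma q_neq0 : q != 0.
Proof. by rewrite /q tofrac_eq0 polyX_eq0. Qed.

Lemma qXn_neq1 j : (0 < j)%N -> q ^+ j != 1.
Proof.
move=> j0; rewrite /q -tofracXn -tofrac1 tofrac_eq.
apply/negP => /eqP E; have := congr1 (fun r : {poly int} => size r) E; rewrite size_polyXn size_poly1; lia.
Qed.

Lemma qz_neq1 (z : int) : z != 0 -> 1 - q ^ z != 0.
Proof.
move=> H; rewrite subr_eq0 eq_sym; case: z H => [j|j] H.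
  by apply: qXn_neq1; move: H; rewrite -lt0n.
by rewrite /= invr_eq1; apply: qXn_neq1.
Qed.

Section S6.
Variable p : nat.
Hypothesis p0 : (0 < p)%N.
Local Notation n := p.+1.
Local Notation B := (burau_cox n).

Lemma ONE_w0 : ONE p *m w0 p *m ONE p = (1 - q) *: ONE p.
Proof.
apply/matrixP => i j; rewrite !mxE big_ord1 !mxE mulr1.
rewrite (bigD1 ord0) //= !mxE eqxx mul1r big1 ?addr0 ?mulr1 //.
by move=> k /negbTE Hk; rewrite !mxE Hk mulr0.
Qed.

Lemma ONE_B : ONE p *m B = ONE p.
Proof.
rewrite burau_cox_eq // mulmxDr -scalemxAr ONE_Q mulmxA ONE_w0 -scalerDl.
by rewrite addrC subrK scale1r.
Qed.

Lemma detQ1_unit : \det (Q p 1) * \det (Q p p) = 1.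
Proof. by rewrite -det_mulmx Q_mul -[(1 + p)%N]mul1n Qn det1. Qed.

Lemma ONE_B1 : ONE p *m B = 1 *: ONE p.
Proof. by rewrite scale1r ONE_B. Qed.

Lemma ONE_cQ c k : ONE p *m (c *: Q p k) = c *: ONE p.
Proof. by rewrite -scalemxAr ONE_Q. Qed.

Lemma negscal (M : 'M[K]_n) : 0%:M - (-1) *: M = M.
Proof. by apply/matrixP => i j; rewrite !mxE mul0rn sub0r mulN1r opprK. Qed.

Lemma B_unit : B \in unitmx.
Proof.
rewrite unitmxE unitfE.
have := detL 0 (-1) ONE_B1 (ONE_cQ q 1) (burau_cox_eq p0).
rewrite !negscal detZ => E; apply/eqP => B0; move: E; rewrite B0 mul0r => /esym /eqP.
rewrite !mulf_eq0 expf_eq0 (negbTE q_neq0) andbF /=.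
have := detQ1_unit; case: (\det (Q p 1) =P 0) => [->|_]; first by rewrite mul0r => /esym /eqP; rewrite oner_eq0.
move=> _ /=; apply/negP; rewrite subr_eq0 mulN1r; apply/eqP; by move/eqP; rewrite eq_sym oppr_eq0 oner_eq0.
Qed.


Lemma invB_inS : inS (q^-1) p (invmx B).
Proof.
set X := invmx B; set Y := q^-1 *: Q p p.
have E : B *m Y = 1%:M + q^-1 *: (w0 p *m ONE p).
  rewrite /Y burau_cox_eq // mulmxDl -!scalemxAr -scalemxAl scalerA mulVf ?q_neq0 //.
  by rewrite scale1r Q_mul -[(1 + p)%N]mul1n Qn -mulmxA ONE_Q scalemxAl.
exists (- (q^-1 *: (X *m w0 p))).
transitivity (X *m (B *m Y - q^-1 *: (w0 p *m ONE p))).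
  by rewrite E addrK mulmx1.
rewrite mulmxBr mulmxA mulVmx ?B_unit // mul1mx -scalemxAr mulmxA scalemxAl mulNmx.
by rewrite /Y.
Qed.

Lemma ONE_invB : ONE p *m invmx B = ONE p.
Proof.
by rewrite -{1}ONE_B -mulmxA mulmxV ?B_unit // mulmx1.
Qed.

Lemma ONE_iter A j : ONE p *m A = ONE p -> ONE p *m iter j (mulmx A) 1%:M = ONE p.
Proof.
move=> HA; elim: j => [|j IH] /=; first by rewrite mulmx1.
by rewrite mulmxA HA IH.
Qed.

Lemma sigma_form (m : int) : gcdz n%:Z m = 1 ->
  ONE p *m burau_sigma n m = ONE p /\
  exists k, coprime k n /\ inS (q ^ m) k (burau_sigma n m).
Proof.
case: m => j Hg; rewrite /burau_sigma /= /mxpown.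
  split; first exact: ONE_iter ONE_B.
  exists (j * 1)%N; split.
    rewrite muln1 coprime_sym /coprime; move: Hg; rewrite /gcdz /= => -[->] //.
  apply: iter_inS; have [w Hw] : inS q 1 B by exists (w0 p); exact: burau_cox_eq.
  by exists w.
split; first exact: (ONE_iter j.+1 ONE_invB).
exists (j.+1 * p)%N; split.
  rewrite coprimeMl coprimenS andbT coprime_sym /coprime; move: Hg; rewrite /gcdz /= => -[->] //.
have -> : q ^ Negz j = (q^-1) ^+ j.+1 by rewrite exprVn.
exact: (iter_inS j.+1 invB_inS).
Qed.

End S6.

Lemma final_alg (F : fieldType) (x : F) (r : nat) (s Z dd : F) :
  1 - x != 0 -> 1 - x ^+ r.+2 != 0 -> 1 - Z != 0 -> 1 - s != 0 ->
  dd * (1 - Z) = (1 - Z ^+ r.+2) * (1 - s) ->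
  ((1 - x) * (1 - Z ^+ r.+2)) / ((1 - x ^+ r.+2) * (1 - Z)) =
  ((1 - x ^+ r.+2) / (1 - x) * (1 - s))^-1 * dd.
Proof.
move=> hq hn hZ hs D.
have Hdd : dd = (1 - Z ^+ r.+2) * (1 - s) / (1 - Z).
  by apply: (mulIf hZ); rewrite -D mulfK.
rewrite Hdd; field.
by rewrite hq hn hZ hs.
Qed.

Unset Implicit Arguments.
Theorem corollary3p3 (n : nat) (m m' : int) :
  (2 <= n)%N -> m' != 0 ->
  gcdz n%:Z m = 1 -> gcdz n%:Z (m + m') = 1 ->
  alex_torus n (m + m') =
    (qint n * (1 - q ^ m'))^-1 * (zeta n m (q ^ m'))^-1.
Proof.
move=> n2 m'0 g1 g2.
case: n n2 g1 g2 => [|[|r]] // _ g1 g2.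
have p0 : (0 < r.+1)%N by [].
have [HONE [k [cop [w Hw]]]] := sigma_form p0 g1.
have mm0 : m + m' != 0.
  by apply/eqP => E; move: g2; rewrite E gcdz0.
have HONE1 : ONE r.+1 *m burau_sigma r.+2 m = 1 *: ONE r.+1 by rewrite scale1r.
have D := detL 1 (q ^ m') HONE1 (ONE_cQ r.+1 (q ^ m) k) Hw.
rewrite scalerA detQk // detQ1 mulr1 in D.
have sZ : q ^ m' * q ^ m = q ^ (m + m') by rewrite -expfzDr ?q_neq0 // addrC.
rewrite sZ in D.
have hq : 1 - q != 0 by have := qz_neq1 (z := 1) isT.
have hn : 1 - q ^+ r.+2 != 0 by have := qz_neq1 (z := r.+2) isT.
have hZ : 1 - q ^ (m + m') != 0 by exact: qz_neq1.
have hs : 1 - q ^ m' != 0 by exact: qz_neq1.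
rewrite /zeta invrK /alex_torus /qint.
have -> : q ^ ((r.+2)%:Z * (m + m')) = (q ^ (m + m')) ^+ r.+2 by rewrite mulrC -exprz_exp.
exact: (@final_alg K q r (q ^ m') (q ^ (m + m')) _ hq hn hZ hs D).
Qed.
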